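(* Assume the CFL condition, let $k\in\mathbb R$, and let $\eta_i^n=|U_i^n-k|$ and $Q_i^n=\hat f(U_i^n\vee k,U_{i+1}^n\vee k)-\hat f(U_i^n\wedge k,U_{i+1}^n\wedge k)$. Then for all $i,n$, $$\eta_i^{n+1}-\eta_i^n+\Delta t\,D_-Q_i^n-\Delta t\,D_-D_+|A(U_i^n)-A(k)|\le\Delta t\,\operatorname{sgn}(U_i^{n+1}-k)\,b\,\mathcal L\langle U^n\rangle_i .$$
   Context: Let $f,a:\mathbb R\to\mathbb R$ be Lipschitz, $a\ge0$ bounded, $f(0)=0$, $A(u)=\int_0^ua(s)ds$, $b\ge0$, $\lambda\in(0,1)$, $c_\lambda>0$, $\mathcal L[u](x)=c_\lambda\int_{|z|>0}\frac{u(x+z)-u(x)}{|z|^{1+\lambda}}dz$. Let $\hat f:\mathbb R^2\to\mathbb R$ be $C^1$ and Lipschitz, consistent ($\hat f(u,u)=f(u)$), nondecreasing in its first and nonincreasing in its second argument. Grid: $x_i=i\Delta x$, $I_i=[x_i,x_{i+1})$, $t_n=n\Delta t$. Weights $G^i_j=\int_{I_i}\mathcal L[\mathbf 1_{I_j}](x)dx$; these satisfy $G^i_j\ge0$ for $i\ne j$, $\sum_j|G^i_j|<\infty$, $\sum_iG^i_j=\sum_jG^i_j=0$, $G^i_j=G^j_i$, $G^{i+1}_{j+1}=G^i_j$, and $G^i_i=-d_\lambda\Delta x^{1-\lambda}$ with $d_\lambda=c_\lambda\big(\int_{|z|<1}|z|^{-\lambda}dz+\int_{|z|>1}|z|^{-1-\lambda}dz\big)$.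 $D_\pm U_i=\pm(U_{i\pm1}-U_i)/\Delta x$, $\mathcal L\langle U\rangle_i=\frac1{\Delta x}\sum_jG^i_jU_j$. Scheme: $U_i^{n+1}=U_i^n-\Delta t\,D_-\big[\hat f(U_i^n,U_{i+1}^n)-D_+A(U_i^n)\big]+\Delta t\,b\,\mathcal L\langle U^n\rangle_i$, $U^0_i=\frac1{\Delta x}\int_{I_i}u_0$ with $u_0\in L^1(\mathbb R)\cap BV(\mathbb R)$. CFL condition: $\frac{\Delta t}{\Delta x}(\|\partial_{1}\hat f\|_\infty+\|\partial_{2}\hat f\|_\infty)+\frac{2\Delta t}{\Delta x^2}\|a\|_\infty+b\,d_\lambda\frac{\Delta t}{\Delta x^\lambda}\le1$. $x\vee y=\max\{x,y\}$, $x\wedge y=\min\{x,y\}$; $\operatorname{sgn}$ is the sign function (any value in $[-1,1]$ at $0$). *)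

(* Defs.v *)
From Stdlib Require Import Reals Lra Lia ZArith List Classical ClassicalDescription IndefiniteDescription.
Open Scope R_scope.

Definition zpartial (a : Z -> R) (N : nat) : R :=
  sum_f_R0 (fun k => a (Z.of_nat k - Z.of_nat N)%Z) (2 * N).

(** The (symmetric-limit) value of  sum_{j in Z} a j  (0 if it does not converge). *)
Definition zsum (a : Z -> R) : R :=
  match excluded_middle_informative (exists l, Un_cv (zpartial a) l) with
  | left h => proj1_sig (constructive_indefinite_description _ h)
  | right _ => 0
  end.

Definition zsummable_abs (a : Z -> R) : Prop :=
  exists M, forall N, zpartial (fun j => Rabs (a j)) N <= M.

Definition Dm (dx : R) (V : Z -> R) (i : Z) : R := (V i - V (i - 1)%Z) / dx.
Definition Dp  (dx : R) (V : Z -> R) (i : Z) : R := (V (i + 1)%Z - V i) / dx.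

Definition Lop (G : Z -> Z -> R) (dx : R) (V : Z -> R) (i : Z) : R :=
  / dx * zsum (fun j => G i j * V j).

(** d_lambda = c_lambda ( int_{|z|<1} |z|^{-lambda} dz + int_{|z|>1} |z|^{-1-lambda} dz )
    = c_lambda ( 2/(1-lambda) + 2/lambda ). *)
Definition d_lambda (c lam : R) : R := c * (2 / (1 - lam) + 2 / lam).

Definition Lipschitz (g : R -> R) : Prop :=
  exists L, forall x y, Rabs (g x - g y) <= L * Rabs (x - y).

Definition Lipschitz2 (g : R -> R -> R) : Prop :=
  exists L, forall u v u' v', Rabs (g u v - g u' v') <= L * (Rabs (u - u') + Rabs (v - v')).

Definition continuous2 (g : R -> R -> R) : Prop :=
  forall u v eps, 0 < eps -> exists delta, 0 < delta /\
    forall u' v', Rabs (u' - u) < delta -> Rabs (v' - v) < delta ->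
      Rabs (g u' v' - g u v) < eps.

Fixpoint variation (u : R -> R) (l : list R) : R :=
  match l with
  | x :: ((y :: _) as t) => Rabs (u y - u x) + variation u t
  | _ => 0
  end.
Fixpoint increasing (l : list R) : Prop :=
  match l with
  | x :: ((y :: _) as t) => x <= y /\ increasing t
  | _ => True
  end.
Definition BV (u : R -> R) : Prop :=
  exists M, forall l, increasing l -> variation u l <= M.

(** u in L^1(R) (Riemann-integral rendering): integrals of |u| over compact
    intervals are uniformly bounded, and |u| is integrable on them. *)
Definition L1 (u : R -> R) : Prop :=
  (forall a b, a <= b -> inhabited (Riemann_integrable (fun x => Rabs (u x)) a b)) /\
  exists M, forall a b (pr : Riemann_integrable (fun x => Rabs (u x)) a b),
    a <= b -> RiemannInt pr <= M.

Definition is_sgn (x s : R) : Prop :=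
  (0 < x -> s = 1) /\ (x < 0 -> s = -1) /\ (x = 0 -> -1 <= s <= 1).

(* Main.v *)
Require Import Defs.
From Stdlib Require Import Reals ZArith Lra.
Open Scope R_scope.

Lemma lip_cont (g : R -> R) : Lipschitz g -> forall x, continuity_pt g x.
Proof.
  intros [L HL] x. unfold continuity_pt, continue_in, limit1_in, limit_in.
  intros eps Heps. set (M := Rmax L 0 + 1).
  assert (HM : 0 < M) by (unfold M; generalize (Rmax_r L 0); lra).
  exists (eps / M). split. apply Rdiv_lt_0_compat; lra.
  intros y [_ Hy]. simpl in *. unfold R_dist in *.
  apply Rle_lt_trans with (M * Rabs (y - x)).
  - apply Rle_trans with (L * Rabs (y - x)). apply HL.
    apply Rmult_le_compat_r. apply Rabs_pos. unfold M; generalize (Rmax_l L 0); lra.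
  - apply Rmult_lt_reg_l with (/ M). apply Rinv_0_lt_compat; lra.
    rewrite <- Rmult_assoc, Rinv_l by lra. unfold Rdiv in Hy. lra.
Qed.

Lemma A_bounds (a A : R -> R) (norma : R)
  (Ha_lip : Lipschitz a) (Ha_nonneg : forall s, 0 <= a s)
  (HA : forall u, exists pr : Riemann_integrable a 0 u, A u = RiemannInt pr)
  (Hna : forall s, a s <= norma) :
  forall u u', u <= u' -> 0 <= A u' - A u <= norma * (u' - u).
Proof.
  intros u u' Huu.
  destruct (HA u) as [p1 E1]. destruct (HA u') as [p3 E3].
  assert (p2 : Riemann_integrable a u u').
  { apply continuity_implies_RiemannInt; auto. intros; apply lip_cont; auto. }
  assert (E : A u' - A u = RiemannInt p2).
  { rewrite E1, E3, <- (RiemannInt_P26 p1 p2 p3). ring. }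
  rewrite E. split.
  - assert (Z0 : RiemannInt (RiemannInt_P14 u u' 0) = 0).
    { rewrite RiemannInt_P15; ring. }
    rewrite <- Z0.
    apply RiemannInt_P19; auto.
  - rewrite <- (RiemannInt_P15 (RiemannInt_P14 u u' norma)).
    apply RiemannInt_P19; auto.
Qed.

Lemma mvt_bound (g g' : R -> R) (N : R)
  (Hd : forall x, derivable_pt_lim g x (g' x)) (HN : forall x, Rabs (g' x) <= N) :
  forall u u', u <= u' -> Rabs (g u' - g u) <= N * (u' - u).
Proof.
  intros u u' H. destruct (Req_dec u u') as [->|Hne].
  - replace (g u' - g u') with 0 by ring. rewrite Rabs_R0. lra.
  - destruct (MVT_cor2 g g' u u') as [c [Ec _]]. lra. intros; auto.
    rewrite Ec, Rabs_mult, (Rabs_right (u' - u)) by lra.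
    apply Rmult_le_compat_r; auto; lra.
Qed.

Theorem mainTheorem10
  (f a : R -> R) (A : R -> R) (b lam c : R)
  (fhat : R -> R -> R) (d1 d2 : R -> R -> R)
  (G : Z -> Z -> R) (dx dt : R) (u0 : R -> R) (U : nat -> Z -> R)
  (normd1 normd2 norma : R) (k : R)
  (* f, a *)
  (Hf_lip : Lipschitz f) (Ha_lip : Lipschitz a) (Hf0 : f 0 = 0)
  (Ha_nonneg : forall s, 0 <= a s)
  (Ha_bdd : exists M, forall s, Rabs (a s) <= M)
  (HA : forall u, exists pr : Riemann_integrable a 0 u, A u = RiemannInt pr)
  (Hb : 0 <= b) (Hlam : 0 < lam < 1) (Hc : 0 < c)
  (* numerical flux: C^1 (continuous partial derivatives d1, d2), Lipschitz,
     consistent, monotone *)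
  (Hd1 : forall u v, derivable_pt_lim (fun x => fhat x v) u (d1 u v))
  (Hd2 : forall u v, derivable_pt_lim (fun y => fhat u y) v (d2 u v))
  (Hd1c : continuous2 d1) (Hd2c : continuous2 d2)
  (Hfhat_lip : Lipschitz2 fhat)
  (Hcons : forall u, fhat u u = f u)
  (Hmon1 : forall u u' v, u <= u' -> fhat u v <= fhat u' v)
  (Hmon2 : forall u v v', v <= v' -> fhat u v' <= fhat u v)
  (* grid *)
  (Hdx : 0 < dx) (Hdt : 0 < dt)
  (* weights G^i_j *)
  (HG_off : forall i j, i <> j -> 0 <= G i j)
  (HG_sum : forall i, zsummable_abs (fun j => G i j))
  (HG_row : forall i, zsum (fun j => G i j) = 0)
  (HG_col : forall j, zsum (fun i => G i j) = 0)
  (HG_sym : forall i j, G i j = G j i)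
  (HG_tr : forall i j, G (i + 1)%Z (j + 1)%Z = G i j)
  (HG_diag : forall i, G i i = - d_lambda c lam * Rpower dx (1 - lam))
  (* initial datum *)
  (Hu0_L1 : L1 u0) (Hu0_BV : BV u0)
  (HU0 : forall i : Z, exists pr : Riemann_integrable u0 (IZR i * dx) (IZR (i + 1) * dx),
           U 0%nat i = RiemannInt pr / dx)
  (* scheme *)
  (HU : forall (n : nat) (i : Z),
      U (S n) i = U n i
        - dt * Dm dx (fun j => fhat (U n j) (U n (j + 1)%Z)
                                   - Dp dx (fun m => A (U n m)) j) i
        + dt * b * Lop G dx (U n) i)
  (* CFL condition *)
  (Hn1 : is_lub (fun r => exists u v, r = Rabs (d1 u v)) normd1)
  (Hn2 : is_lub (fun r => exists u v, r = Rabs (d2 u v)) normd2)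
  (Hna : is_lub (fun r => exists s, r = Rabs (a s)) norma)
  (HCFL : dt / dx * (normd1 + normd2) + 2 * dt / (dx * dx) * norma
          + b * d_lambda c lam * (dt / Rpower dx lam) <= 1) :
  forall (n : nat) (i : Z) (s : R),
    is_sgn (U (S n) i - k) s ->
    let eta := fun (m : nat) (j : Z) => Rabs (U m j - k) in
    let Q := fun j => fhat (Rmax (U n j) k) (Rmax (U n (j + 1)%Z) k)
                    - fhat (Rmin (U n j) k) (Rmin (U n (j + 1)%Z) k) in
    eta (S n) i - eta n i + dt * Dm dx Q i
      - dt * Dm dx (Dp dx (fun j => Rabs (A (U n j) - A k))) i
    <= dt * s * b * Lop G dx (U n) i.
Proof.
  intros n i s Hs eta Q.
  assert (Hna' : forall x, a x <= norma).
  { intro x. apply Rle_trans with (Rabs (a x)). apply Rle_abs. apply Hna. eauto. }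
  assert (HAb := A_bounds a A norma Ha_lip Ha_nonneg HA Hna').
  assert (H1b : forall v u u', u <= u' -> fhat u' v - fhat u v <= normd1 * (u' - u)).
  { intros v u u' H. eapply Rle_trans. apply Rle_abs.
    apply (mvt_bound (fun x => fhat x v) (fun x => d1 x v)); auto.
    intro x. apply Hn1. eauto. }
  assert (H2b : forall v u u', u <= u' -> fhat v u - fhat v u' <= normd2 * (u' - u)).
  { intros v u u' H. eapply Rle_trans. apply Rle_abs. rewrite <- Rabs_Ropp.
    rewrite Ropp_minus_distr.
    apply (mvt_bound (fun x => fhat v x) (fun x => d2 v x)); auto.
    intro x. apply Hn2. eauto. }
  assert (Hdl : 0 <= b * d_lambda c lam * (dt / Rpower dx lam)).
  { apply Rmult_le_pos. apply Rmult_le_pos. lra. unfold d_lambda.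
    apply Rmult_le_pos. lra. apply Rplus_le_le_0_compat; apply Rlt_le, Rdiv_lt_0_compat; lra.
    apply Rlt_le, Rdiv_lt_0_compat. lra. unfold Rpower. apply exp_pos. }
  set (H := fun v u w => u - dt * ((fhat u w - (A w - A u) / dx) - (fhat v u - (A u - A v) / dx)) / dx).
  assert (Hmv : forall v v' u w, v <= v' -> H v u w <= H v' u w).
  { intros v v' u w Hv. unfold H.
    assert (E : H v' u w - H v u w = dt / dx * (fhat v' u - fhat v u) + dt / (dx * dx) * (A v' - A v)).
    { unfold H. field. lra. }
    unfold H in E. 
    assert (0 <= dt / dx * (fhat v' u - fhat v u)).
    { apply Rmult_le_pos. apply Rlt_le, Rdiv_lt_0_compat; lra. generalize (Hmon1 v v' u Hv); lra. }
    assert (0 <= dt / (dx * dx) * (A v' - A v)).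
    { apply Rmult_le_pos. apply Rlt_le, Rdiv_lt_0_compat. lra. apply Rmult_lt_0_compat; lra.
      apply HAb; auto. }
    lra. }
  assert (Hmw : forall v u w w', w <= w' -> H v u w <= H v u w').
  { intros v u w w' Hw.
    assert (E : H v u w' - H v u w = dt / dx * (fhat u w - fhat u w') + dt / (dx * dx) * (A w' - A w)).
    { unfold H. field. lra. }
    assert (0 <= dt / dx * (fhat u w - fhat u w')).
    { apply Rmult_le_pos. apply Rlt_le, Rdiv_lt_0_compat; lra. generalize (Hmon2 u w w' Hw); lra. }
    assert (0 <= dt / (dx * dx) * (A w' - A w)).
    { apply Rmult_le_pos. apply Rlt_le, Rdiv_lt_0_compat. lra. apply Rmult_lt_0_compat; lra.
      apply HAb; auto. }
    lra. }
  assert (Hmu : forall v u u' w, u <= u' -> H v u w <= H v u' w).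
  { intros v u u' w Hu.
    assert (E : H v u' w - H v u w = (u' - u) - dt / dx * ((fhat u' w - fhat u w) + (fhat v u - fhat v u'))
               - 2 * dt / (dx * dx) * (A u' - A u)).
    { unfold H. field. lra. }
    assert (X1 := H1b w u u' Hu). assert (X2 := H2b v u u' Hu). assert (X3 := HAb u u' Hu).
    assert (Y1 : dt / dx * ((fhat u' w - fhat u w) + (fhat v u - fhat v u'))
                 <= dt / dx * ((normd1 + normd2) * (u' - u))).
    { apply Rmult_le_compat_l. apply Rlt_le, Rdiv_lt_0_compat; lra. lra. }
    assert (Y2 : 2 * dt / (dx * dx) * (A u' - A u) <= 2 * dt / (dx * dx) * (norma * (u' - u))).
    { apply Rmult_le_compat_l. apply Rlt_le, Rdiv_lt_0_compat. lra. apply Rmult_lt_0_compat; lra. lra. }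
    assert (Y3 : (dt / dx * (normd1 + normd2) + 2 * dt / (dx * dx) * norma) * (u' - u) <= 1 * (u' - u)).
    { apply Rmult_le_compat_r; lra. }
    assert (Y4 : dt / dx * ((normd1 + normd2) * (u' - u)) + 2 * dt / (dx * dx) * (norma * (u' - u))
       = (dt / dx * (normd1 + normd2) + 2 * dt / (dx * dx) * norma) * (u' - u)) by ring.
    lra. }
  assert (Hm : forall v u w v' u' w', v <= v' -> u <= u' -> w <= w' -> H v u w <= H v' u' w').
  { intros. apply Rle_trans with (H v' u w). auto. apply Rle_trans with (H v' u' w); auto. }
  set (um := U n (i - 1)%Z). set (u := U n i). set (up := U n (i + 1)%Z).
  assert (EU : U (S n) i = H um u up + dt * b * Lop G dx (U n) i).
  { rewrite HU. unfold H, Dm, Dp, um, u, up. replace (i - 1 + 1)%Z with i by ring. field. lra. }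
  assert (Hk : H k k k = k). { unfold H. field. lra. }
  assert (Habs : forall x, Rmax x k - Rmin x k = Rabs (x - k)).
  { intro x. unfold Rmax, Rmin, Rabs. destruct (Rle_dec x k), (Rcase_abs (x - k)); lra. }
  assert (HAabs : forall x, A (Rmax x k) - A (Rmin x k) = Rabs (A x - A k)).
  { intro x. destruct (Rle_dec x k).
    - rewrite Rmax_right, Rmin_left by lra. assert (T := HAb x k r).
      rewrite Rabs_left1 by lra. ring.
    - rewrite Rmax_left, Rmin_right by lra. assert (T := HAb k x ltac:(lra)).
      rewrite Rabs_right by lra. ring. }
  set (Hp := H (Rmax um k) (Rmax u k) (Rmax up k)).
  set (Hn := H (Rmin um k) (Rmin u k) (Rmin up k)).
  assert (B1 : H um u up <= Hp) by (apply Hm; apply Rmax_l).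
  assert (B2 : k <= Hp) by (rewrite <- Hk at 1; apply Hm; apply Rmax_r).
  assert (B3 : Hn <= H um u up) by (apply Hm; apply Rmin_l).
  assert (B4 : Hn <= k) by (rewrite <- Hk at 1; apply Hm; apply Rmin_r).
  assert (Hsb : Rabs s <= 1 /\ Rabs (U (S n) i - k) = s * (U (S n) i - k)).
  { destruct Hs as [Sa [Sb Sc]].
    destruct (Rtotal_order (U (S n) i - k) 0) as [Hl|[He|Hg]].
    - rewrite (Sb Hl). split; [rewrite Rabs_left by lra; lra | rewrite Rabs_left by lra; ring].
    - rewrite He, Rabs_R0. destruct (Sc He). split. apply Rabs_le; lra. ring.
    - rewrite (Sa Hg). split; [rewrite Rabs_R1; lra | rewrite Rabs_right by lra; ring]. }
  destruct Hsb as [Hs1 Hs2].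
  assert (SX : s * (H um u up - k) <= Hp - Hn).
  { apply Rle_trans with (Rabs (s * (H um u up - k))). apply Rle_abs.
    rewrite Rabs_mult. apply Rle_trans with (1 * Rabs (H um u up - k)).
    apply Rmult_le_compat_r. apply Rabs_pos. auto.
    unfold Rabs; destruct (Rcase_abs (H um u up - k)); lra. }
  assert (EP : Hp - Hn = Rabs (u - k) - dt * Dm dx Q i
          + dt * Dm dx (Dp dx (fun j => Rabs (A (U n j) - A k))) i).
  { unfold Hp, Hn, H, Q, Dm, Dp. replace (i - 1 + 1)%Z with i by ring. fold um u up.
    rewrite <- (Habs u), <- (HAabs um), <- (HAabs u), <- (HAabs up). field. lra. }
  unfold eta. rewrite Hs2, EU. fold u. 
  replace (s * (H um u up + dt * b * Lop G dx (U n) i - k))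
    with (s * (H um u up - k) + dt * s * b * Lop G dx (U n) i) by ring.
  lra.
Qed.
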